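(* Let $m\ge 1$, let $D_{2m}=\langle u,v : u^m=e=v^2,\ vu=u^{m-1}v\rangle$, let $C_m=\langle u\rangle$ and $C_mv=\{u^iv: 0\le i<m\}$. If $S\subseteq C_mv$, then $D_{2m}$ has an $S$-sequencing.
   Context: For a group $G$ with identity $e$ and a set $S\subseteq G\setminus\{e\}$ with $|S|=k$, an $S$-sequencing of $G$ is an ordering $(g_1,\dots,g_k)$ of the elements of $S$ (each used exactly once) such that the partial products $h_0=e$, $h_i=g_1g_2\cdots g_i$ ($1\le i\le k$) are pairwise distinct. *)

(* Defs.v *)
From mathcomp Require Import all_boot all_algebra.
Set Implicit Arguments. Unset Strict Implicit. Unset Printing Implicit Defensive.
Import GRing.Theory.

Definition is_sequencing (T : finType) (mul : T -> T -> T) (e : T)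
    (S : {set T}) (s : seq T) : bool :=
  perm_eq s (enum S) && uniq (e :: scanl mul e s).

(* Concrete model of the dihedral group D_{2m}, m = n.+1 >= 1:
   (i, false) = u^i and (i, true) = u^i v, with i taken mod m. *)
Definition dih (n : nat) : finType := ('I_n.+1 * bool)%type.

Definition dmul (n : nat) (x y : dih n) : dih n :=
  ((x.1 + (if x.2 then - y.1 else y.1))%R, x.2 (+) y.2).
Definition de (n : nat) : dih n := (0%R, false).
Definition du (n : nat) : dih n := (Ordinal (ltn_pmod 1 (ltn0Sn n)), false).
Definition dv (n : nat) : dih n := (0%R, true).
Definition dpow (n : nat) (x : dih n) (i : nat) : dih n := iter i (dmul x) (de n).

Definition Cmv (n : nat) : {set dih n} :=
  [set dmul (dpow (du n) i) (dv n) | i : 'I_n.+1].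

Definition has_sequencing (n : nat) (S : {set dih n}) : Prop :=
  exists s : seq (dih n), is_sequencing (@dmul n) (de n) S s.

(* Main.v *)
Require Import Defs.
From mathcomp Require Import all_boot all_algebra zify.
Import GRing.Theory.

Lemma vaddS n (a b : 'I_n.+1) : a + b < n.+1 -> nat_of_ord (a + b)%R = a + b.
Proof. by move=> h; rewrite /= modn_small. Qed.

Lemma vsubS n (a b : 'I_n.+1) : b <= a -> nat_of_ord (a - b)%R = a - b.
Proof.
move=> h /=.
rewrite modnDmr.
have ha := ltn_ord a; have hb := ltn_ord b.
have -> : a + (n.+1 - b) = (a - b) + n.+1 by rewrite addnBA ?(ltnW hb) // addnC -addnBA // addnC.
by rewrite modnDr modn_small // (leq_ltn_trans (leq_subr _ _) ha).
Qed.

Definition gtr n (x y : dih n) : bool := nat_of_ord y.1 < nat_of_ord x.1.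

Lemma key n (s : seq (dih n)) (r : 'I_n.+1) :
  all (fun x : dih n => x.2) s -> sorted (@gtr n) s ->
  r + nat_of_ord (head (de n) s).1 < n.+1 ->
  [/\ uniq ((r,false) :: scanl (@dmul n) (r,false) s),
      forall y, y \in scanl (@dmul n) (r,false) s -> ~~ y.2 -> r < nat_of_ord y.1 &
      forall y, y \in scanl (@dmul n) (r,false) s -> y.2 ->
        nat_of_ord y.1 <= r + nat_of_ord (head (de n) s).1].
Proof.
elim: {s}(size s).+1 {-2}s (ltnSn (size s)) r => // k IH [|[a ba] [|[b bb] t]] /= Hk r.
- by move=> _ _ _; split.
- move=> /andP[-> _] _ hr; rewrite /dmul /=.
  split=> //.
  + by rewrite !inE /= andbT; apply/negP => /eqP [].
  + by move=> y; rewrite inE => /eqP -> .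
  + move=> y; rewrite inE => /eqP -> /= _.
    by rewrite leq_mod.
- move=> /and3P[-> -> At] /andP[Hab St] hr; rewrite /gtr /= in Hab.
  have E1 : dmul (r,false) (a,true) = ((r + a)%R, true) by [].
  have E2 : dmul ((r + a)%R, true) (b,true) = (((r + a) - b)%R, false) by [].
  have Hra : nat_of_ord (r + a)%R = r + a by rewrite vaddS.
  have Hc : nat_of_ord ((r + a) - b)%R = r + a - b by rewrite vsubS Hra // (leq_trans (ltnW Hab)) // leq_addl.
  move: E1 E2 Hra Hc; set ra := (r + a)%R; set c := (ra - b)%R.
  clearbody ra c => E1 E2 Hra Hc.
  have Hct : c + nat_of_ord (head (de n) t).1 < n.+1.
    case: t St {Hk At} => [|[d bd] t] /=.
      by rewrite addn0 Hc (leq_ltn_trans (leq_subr _ _)) // -Hra.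
    move=> /andP[Hbd _]; rewrite /gtr /= in Hbd.
    rewrite Hc; lia.
  have [U B C] := IH t (ltnW (ltnSE Hk)) c At (path_sorted St) Hct.
  have Hrc : r < c by rewrite Hc; lia.
  have Hcra : forall y, y \in scanl (@dmul n) (c, false) t -> y.2 -> nat_of_ord y.1 < r + a.
    case: t St C {Hk At U B Hct} => [|[d bd] t] //= /andP[Hbd _] C y Hy Hy2.
    rewrite /gtr /= in Hbd.
    have := C y Hy Hy2 => /= h; apply: (leq_ltn_trans h).
    rewrite Hc; lia.
  rewrite E1 E2.
  move/andP: U => [U1 U2].
  split.
  - apply/and4P; split => //.
    + rewrite !inE !negb_or; apply/and3P; split.
      * by apply/eqP => -[].
      * by rewrite /= andbT; apply/eqP => E; rewrite E ltnn in Hrc.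
      * by apply/negP => /B /(_ isT); rewrite ltnNge (ltnW Hrc).
    + rewrite inE negb_or; apply/andP; split; first by apply/eqP => -[].
      apply/negP => /Hcra /(_ isT).
      by rewrite /= Hra ltnn.
  - move=> y; rewrite !inE => /orP[/eqP->//|/orP[/eqP-> _//|Hy Hy2]].
    exact: ltn_trans Hrc (B y Hy Hy2).
  - move=> y; rewrite !inE => /orP[/eqP-> _|/orP[/eqP->//|Hy Hy2]].
      by rewrite /= Hra.
    exact: ltnW (Hcra y Hy Hy2).
Qed.

Lemma dpow2 n i : (dpow (du n) i).2 = false.
Proof. by elim: i => //= i IH; rewrite /dmul /= IH. Qed.

Theorem lemma3p1 (n : nat) (S : {set dih n}) :
  S \subset Cmv n -> has_sequencing S.
Proof.
move=> HS.
set t := sort (fun x y : dih n => nat_of_ord x.1 <= nat_of_ord y.1) (enum S).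
have At : all (fun x : dih n => x.2) t.
  apply/allP => x; rewrite mem_sort mem_enum => /(subsetP HS) /imsetP [i _ ->].
  by rewrite /dmul /= dpow2.
have St : sorted (fun x y : dih n => nat_of_ord x.1 < nat_of_ord y.1) t.
  have := ltn_sorted_uniq_leq (map (fun x : dih n => nat_of_ord x.1) t).
  rewrite sorted_map => ->.
  apply/andP; split.
    rewrite map_inj_in_uniq ?sort_uniq ?enum_uniq //.
    move=> [x1 x2] [y1 y2] Hx Hy /= E.
    move/allP: At => At; have := At _ Hx; have := At _ Hy => /= -> ->.
    by rewrite (ord_inj E).
  rewrite sorted_map; apply: sort_sorted => x y; exact: leq_total.
exists (rev t); apply/andP; split.
  by rewrite perm_rev perm_sort.
have H1 : all (fun x : dih n => x.2) (rev t) by rewrite all_rev.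
have H2 : sorted (@gtr n) (rev t) by rewrite rev_sorted.
have H3 : (0 : 'I_n.+1)%R + nat_of_ord (head (de n) (rev t)).1 < n.+1 by rewrite add0n ltn_ord.
by case: (@key n (rev t) 0%R H1 H2 H3).
Qed.
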